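(* Let $p,q\ge0$, $n=p+q\ge1$, $N=2^{\lfloor (n+1)/2\rfloor}$. For every $M\in\mathcal{G}^{\mathbb{C}}_{p,q}$: $C_{(N)}(M^\dagger M)=0$ if and only if $C_{(N)}(M)=0$; and $C_{(1)}(M^\dagger M)=0$ if and only if $M=0$.
   Context: Let $\mathcal{G}_{p,q}$ be the real Clifford algebra with identity $e$ and generators $e_1,\dots,e_n$ satisfying $e_ae_b+e_be_a=2\eta_{ab}e$, $\eta={\rm diag}(1,\dots,1,-1,\dots,-1)$ ($p$ ones, $q$ minus ones), basis elements $e_A=e_{a_1}\cdots e_{a_k}$ for $a_1<\dots<a_k$, and $\mathcal{G}^{\mathbb{C}}_{p,q}=\mathbb{C}\otimes\mathcal{G}_{p,q}$ with elements $M=\sum_A m_Ae_A$, $m_A\in\mathbb{C}$. Hermitian conjugation: $M^\dagger=\sum_A\overline{m_A}(e_A)^{-1}$. Let $\langle M\rangle_0$ denote the coefficient of $e$ (scalar part). Let $\beta$ be an algebra isomorphism from $\mathcal{G}^{\mathbb{C}}_{p,q}$ onto ${\rm Mat}(N,\mathbb{C})$ if $n$ is even, and onto block-diagonal matrices ${\rm diag}(X,Y)$, $X,Y\in{\rm Mat}(N/2,\mathbb{C})$, if $n$ is odd. The characteristic polynomial coefficients $C_{(k)}(M)$, $k=1,\dots,N$, are defined by $\det(\lambda I_N-\beta(M))=\lambda^N-C_{(1)}(M)\lambda^{N-1}-\cdots-C_{(N)}(M)$ (independent of $\beta$); equivalently they are given by the recursion $M_{(1)}=M$, $C_{(k)}=\frac{N}{k}\langle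 M_{(k)}\rangle_0$, $M_{(k+1)}=M(M_{(k)}-C_{(k)})$. *)

(* Defs.v *)
From HB Require Import structures.
From mathcomp Require Import all_boot all_algebra.
From mathcomp Require Import reals complex.
Set Implicit Arguments. Unset Strict Implicit. Unset Printing Implicit Defensive.
Import GRing.Theory Num.Theory.
Local Open Scope ring_scope.

Section Clifford.
Variables (R : realType) (p q : nat).
Local Notation n := (p + q)%N.
Local Notation C := R[i].

(* An element M = sum_A m_A e_A of G^C_{p,q}: the coefficient family
   A |-> m_A, indexed by subsets A of the generator set {e_0..e_(n-1)}
   (a subset A = {a_1 < ... < a_k} stands for e_A = e_{a_1}...e_{a_k}). *)
Definition cl := {ffun {set 'I_n} -> C}.

Definition cl_eta (a : 'I_n) : C := if (a < p)%N then 1 else -1.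

(* e_A e_B = (-1)^{#{(a,b) in A x B | b < a}} (prod_{c in A cap B} eta_cc) e_{A Δ B} *)
Definition cl_sign (A B : {set 'I_n}) : C :=
  (-1) ^+ #|[set ab : 'I_n * 'I_n | (ab.1 \in A) && (ab.2 \in B) && (ab.2 < ab.1)%N]|
  * \prod_(c in A :&: B) cl_eta c.

Definition cl_symdiff (A B : {set 'I_n}) : {set 'I_n} := (A :\: B) :|: (B :\: A).

Definition cl_mul (M N : cl) : cl :=
  [ffun D => \sum_(A : {set 'I_n}) \sum_(B : {set 'I_n})
      (if cl_symdiff A B == D then cl_sign A B * M A * N B else 0)].

Definition cl_basis (A : {set 'I_n}) : cl := [ffun B => (B == A)%:R].
Definition cl_one : cl := cl_basis set0.
Definition cl_gen (a : 'I_n) : cl := cl_basis [set a].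

Definition cl_scalar (M : cl) : C := M set0.

(* (e_A)^{-1} = e_{a_k}^{-1} ... e_{a_1}^{-1}, with e_a^{-1} = eta_aa e_a *)
Definition cl_basis_inv (A : {set 'I_n}) : cl :=
  foldr cl_mul cl_one [seq cl_eta a *: cl_gen a | a <- rev (enum A)].

Definition cl_dagger (M : cl) : cl :=
  \sum_(A : {set 'I_n}) (M A)^* *: cl_basis_inv A.

Definition cl_N : nat := 2 ^ (n.+1)./2.

(* Recursion: M_(1) = M, C_(k) = N/k <M_(k)>_0, M_(k+1) = M (M_(k) - C_(k)).
   cl_Mk M k = M_(k+1). *)
Fixpoint cl_Mk (M : cl) (k : nat) : cl :=
  match k with
  | 0 => M
  | k'.+1 => let Mk := cl_Mk M k' in
             let ck := (cl_N%:R / (k'.+1)%:R) * cl_scalar Mk in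
             cl_mul M (Mk - ck *: cl_one)
  end.

Definition cl_C (M : cl) (k : nat) : C :=
  (cl_N%:R / k%:R) * cl_scalar (cl_Mk M k.-1).

End Clifford.

(* Main.v *)
From HB Require Import structures.
Require Import Defs.
From mathcomp Require Import all_boot all_algebra.
From mathcomp Require Import reals complex.
Import GRing.Theory Num.Theory.
Local Open Scope ring_scope.
Set Implicit Arguments. Unset Strict Implicit. Unset Printing Implicit Defensive.

Section Deriv.
Variable F : comNzRingType.

Lemma deriv_sumr (I : Type) (r : seq I) (P : pred I) (f : I -> {poly F}) :
  (\sum_(i <- r | P i) f i)^`() = \sum_(i <- r | P i) (f i)^`().
Proof.
elim: r => [|a r IH]; first by rewrite !big_nil deriv0.
rewrite !big_cons; case: (P a) => //; by rewrite derivD IH.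
Qed.

Lemma deriv_prod_seq (I : eqType) (r : seq I) (f : I -> {poly F}) :
  uniq r ->
  (\prod_(x <- r) f x)^`() =
  \sum_(i <- r) \prod_(x <- r) (if x == i then (f x)^`() else f x).
Proof.
elim: r => [|a r IH] /=; first by rewrite !big_nil derivC.
move=> /andP[anr ur].
rewrite big_cons derivM IH // big_cons big_cons eqxx.
congr (_ + _).
  congr (_ * _); apply: eq_big_seq => x xr.
  by case: eqP => // xa; rewrite -xa xr in anr.
rewrite mulr_sumr; apply: eq_big_seq => i ir.
rewrite big_cons; case: eqP => // ai; by rewrite ai ir in anr.
Qed.

Lemma deriv_det n (P : 'M[{poly F}]_n) :
  (\det P)^`() = \sum_(i < n) \det (\matrix_(r, c) if r == i then (P r c)^`() else P r c).
Proof.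
rewrite /determinant deriv_sumr.
rewrite exchange_big /=; apply: eq_bigr => s _.
rewrite derivM.
have -> : ((-1) ^+ perm.odd_perm s : {poly F})^`() = 0.
  by case: (perm.odd_perm s); rewrite ?expr1 ?expr0 ?derivN derivC ?oppr0.
rewrite mul0r add0r.
rewrite /index_enum deriv_prod_seq; last by rewrite -enumT enum_uniq.
rewrite mulr_sumr; apply: eq_bigr => i _; congr (_ * _).
by apply: eq_bigr => r _; rewrite mxE; case: eqP.
Qed.
End Deriv.

Section Jac.
Variable F : comNzRingType.

Lemma char_poly_deriv n (A : 'M[F]_n) :
  (char_poly A)^`() = \tr (\adj (char_poly_mx A)).
Proof.
rewrite /char_poly deriv_det /mxtrace; apply: eq_bigr => i _.
set P := char_poly_mx A.
set Q := \matrix_(r, c) _.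
rewrite mxE (expand_det_row _ i) (bigD1 i) //= big1 ?addr0.
  rewrite !mxE eqxx /P derivB derivMn derivX derivC subr0 mulr1n mul1r.
  rewrite /cofactor; congr (_ * \det _); apply/matrixP => r c; rewrite !mxE.
  by rewrite eq_sym (negbTE (neq_lift _ _)).
move=> j ji; rewrite !mxE eqxx /P derivB derivMn derivX derivC subr0.
by rewrite eq_sym (negbTE ji) mulr0n mul0r.
Qed.
End Jac.

Section FLs.
Variable F : numFieldType.
Variable n : nat.
Variable A : 'M[F]_n.

Fixpoint flB (k : nat) : 'M[F]_n :=
  match k with
  | 0 => A
  | k'.+1 => A *m (flB k' - (\tr (flB k') / (k'.+1)%:R) *: 1%:M)
  end.

Let P := char_poly_mx A.
Let chi := char_poly A.
Let E (j : nat) : 'M[F]_n := \matrix_(i, l) ((\adj P) i l)`_j.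

Lemma fact1 j : (if j is j'.+1 then E j' else 0) - A *m E j = chi`_j *: 1%:M.
Proof.
apply/matrixP => i l.
have := congr1 (fun M : 'M[{poly F}]_n => (M i l)`_j) (mul_mx_adj P).
rewrite /= !mxE coef_sum => H.
rewrite ?mxE -/chi.
have -> : chi`_j * (i == l)%:R = (chi *+ (i == l))`_j by rewrite coefMn mulr_natr.
rewrite /chi /char_poly -H -/P; apply/esym.
under eq_bigr => k _ do rewrite /P /char_poly_mx !mxE mulrBl coefB mulrnAl coefMn coefXM coefCM.
rewrite sumrB (bigD1 i) //= eqxx mulr1n big1 ?addr0; last first.
  by move=> k /negbTE; rewrite eq_sym => ->.
congr (_ - _); last by apply: eq_bigr => k _; rewrite !mxE.
by clear H; case: j => [|j] /=; rewrite !mxE.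
Qed.


Lemma fact2 j : \tr (E j) = chi`_j.+1 *+ j.+1.
Proof.
have := congr1 (fun p : {poly F} => p`_j) (char_poly_deriv A).
rewrite /= coef_deriv -/chi => ->.
by rewrite /mxtrace coef_sum; apply: eq_bigr => i _; rewrite mxE.
Qed.

Let J0 := (\max_(x : 'I_n * 'I_n) size ((\adj P) x.1 x.2))%N.

Lemma E_big j : (J0 <= j)%N -> E j = 0.
Proof.
move=> hj; apply/matrixP => i l; rewrite !mxE nth_default //.
apply: leq_trans hj.
rewrite /J0; move: (leq_bigmax (F := fun x : 'I_n * 'I_n => size ((\adj P) x.1 x.2)) (i, l)); by rewrite /= mxE.
Qed.

Lemma chi_big j : (n < j)%N -> chi`_j = 0.
Proof.
by move=> hj; rewrite nth_default // size_char_poly.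
Qed.

Lemma E_ge_n d j : (n <= j)%N -> (J0 <= j + d)%N -> E j = 0.
Proof.
elim: d j => [|d IH] j hj hd; first by apply: E_big; rewrite addn0 in hd.
have h1 : E j.+1 = 0 by apply: IH; [exact: leqW | by rewrite addSnnS].
have := fact1 j.+1; rewrite chi_big ?ltnS // scale0r h1.
by rewrite mulmx0 subr0.
Qed.

Lemma E_n : E n = 0.
Proof. exact: (E_ge_n (d:=J0) (leqnn n) (leq_addl _ _)). Qed.

Lemma E_n1 : (0 < n)%N -> E n.-1 = 1%:M.
Proof.
move=> n0; have /= := fact1 n.-1.+1; rewrite prednK // E_n mulmx0 subr0 => ->.
have := char_poly_monic A; rewrite monicE lead_coefE size_char_poly /= -/chi.
by move/eqP => ->; rewrite scale1r.
Qed.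

Lemma trAE j : (j < n)%N -> \tr (A *m E j) = - (chi`_j *+ (n - j)).
Proof.
move=> jn; have := fact1 j.
move/(congr1 (@mxtrace _ _)); rewrite raddfB /= scalemx1 mxtrace_scalar.
move/eqP; rewrite subr_eq addrC -subr_eq => /eqP <-.
rewrite mulrnBr ?(ltnW jn) // opprB; congr (_ - _).
by case: j jn => [|j] _ /=; rewrite ?mxtrace0 ?fact2.
Qed.

Lemma flc_aux : forall k, (k < n)%N -> flB k = A *m E (n - k.+1) /\
   \tr (flB k) / k.+1%:R = - chi`_(n - k.+1).
Proof.
have trk : forall k, (k < n)%N -> \tr (A *m E (n - k.+1)) / k.+1%:R = - chi`_(n - k.+1).
  move=> k kn; rewrite trAE; last by rewrite subnSK // leq_subr.
  rewrite subKn // -[_ *+ k.+1]mulr_natr mulNr mulfK //.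
  by rewrite pnatr_eq0.
elim=> [|k IH] kn.
  by rewrite /= subn1 E_n1 ?mulmx1 //; (have := trk 0%N kn); rewrite /= subn1 E_n1 ?mulmx1 //; apply: leq_ltn_trans kn.
have [IH1 IH2] := IH (ltnW kn).
have e : flB k.+1 = A *m E (n - k.+2).
  rewrite /= IH2 IH1 scaleNr opprK.
  have h : (n - k.+1 = (n - k.+2).+1)%N by rewrite [in RHS]subnS prednK // subn_gt0.
  rewrite h; have /= := fact1 (n - k.+2).+1.
  by move/eqP; rewrite subr_eq => /eqP ->; rewrite addrC.
by split => //; rewrite e trk.
Qed.

Lemma flc_det : (0 < n)%N -> \tr (flB n.-1) / n%:R = - ((-1) ^+ n * \det A).
Proof.
move=> n0; have [|_] := flc_aux (k:=n.-1); first by rewrite ltn_predL.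
rewrite prednK // => ->.
by rewrite subnn char_poly_det.
Qed.

End FLs.

Section Abs.
Variable K : comNzRingType.
Variable Rg : algType K.

Definition PP (g : nat -> Rg) (k : nat) (a : pred nat) : Rg :=
  \prod_(0 <= i < k) (if a i then g i else 1).
Definition sgnP (s : nat -> K) (k : nat) (a : pred nat) : K :=
  \prod_(0 <= i < k) (if a i then s i else 1).

Lemma PPS g k (a : pred nat) : PP g k.+1 a = PP g k a * (if a k then g k else 1).
Proof. by rewrite /PP big_nat_recr. Qed.
Lemma sgnPS s k (a : pred nat) : sgnP s k.+1 a = sgnP s k a * (if a k then s k else 1).
Proof. by rewrite /sgnP big_nat_recr. Qed.
Lemma PP0 g (a : pred nat) : PP g 0 a = 1.
Proof. by rewrite /PP big_geq. Qed.
Lemma sgnP0 s (a : pred nat) : sgnP s 0 a = 1.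
Proof. by rewrite /sgnP big_geq. Qed.

Lemma comm_PP (x : Rg) g s k (a : pred nat) :
  (forall j, (j < k)%N -> a j -> x * g j = s j *: (g j * x)) ->
  x * PP g k a = sgnP s k a *: (PP g k a * x).
Proof.
elim: k => [|k IH] H; first by rewrite PP0 sgnP0 scale1r mul1r mulr1.
rewrite PPS sgnPS mulrA IH; last by move=> j jk; apply: H; apply: ltnW.
rewrite -scalerAl.
case ak: (a k); last by rewrite !mulr1 ?mul1r.
rewrite -(mulrA (PP g k a) x) H // -scalerAr scalerA.
by rewrite -!mulrA.
Qed.

Lemma sgnP_const (c : K) k (a : pred nat) : sgnP (fun _ => c) k a = c ^+ (\sum_(0 <= i < k) a i)%N.
Proof.
elim: k => [|k IH]; first by rewrite sgnP0 big_geq.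
by rewrite sgnPS IH big_nat_recr //= exprD; case: (a k); rewrite ?expr1 ?expr0.
Qed.

Variable g : nat -> Rg.
Variable eta : nat -> K.
Variable L : nat.
Hypothesis gsq : forall i, (i < L)%N -> g i * g i = (eta i)%:A.
Hypothesis ganti : forall i j, (i < L)%N -> (j < L)%N -> i != j -> g i * g j = - (g j * g i).

Definition cnt k (a b : pred nat) : nat :=
  (\sum_(0 <= i < k) a i * \sum_(0 <= j < i) b j)%N.
Definition etaP k (a b : pred nat) : K :=
  \prod_(0 <= i < k) (if a i && b i then eta i else 1).

Lemma PP_mul k (a b : pred nat) : (k <= L)%N ->
  PP g k a * PP g k b = ((-1) ^+ cnt k a b * etaP k a b) *: PP g k (fun i => a i (+) b i).
Proof.
elim: k => [|k IH] kL.
  by rewrite !PP0 /cnt /etaP !big_geq // mulr1 expr0 mul1r scale1r.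
have t : (if a k then g k else 1) * PP g k b =
   (-1) ^+ (a k * \sum_(0 <= j < k) b j)%N *: (PP g k b * (if a k then g k else 1)).
  case: (a k); last by rewrite mul0n expr0 scale1r mulr1 mul1r.
  rewrite mul1n -sgnP_const; apply: comm_PP => j jk _.
  rewrite ganti ?(ltn_trans jk) //; last by rewrite neq_ltn jk orbT.
  by rewrite scaleN1r.
rewrite !PPS mulrA -[PP g k a * _ * _]mulrA t -scalerAr -scalerAl mulrA IH ?(ltnW kL) //.
have t2 : (if a k then g k else 1) * (if b k then g k else 1) =
   (if a k && b k then eta k else 1) *: (if a k (+) b k then g k else 1).
  case: (a k); case: (b k) => /=; rewrite ?mul1r ?mulr1 ?scale1r //.
  by rewrite gsq // -scalerAl mul1r scalerA mulr1 -[in RHS]scalerAl mul1r.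
rewrite -!scalerAl -mulrA t2 -scalerAr !scalerA; congr (_ *: _).
rewrite /cnt /etaP big_nat_recr //= big_nat_recr //= exprD.
set u := (-1) ^+ _; set v := (-1) ^+ _; set w := \prod_(_ <= _ < _) _.
by rewrite [v * u]mulrC !mulrA.
Qed.

End Abs.

Section Gam.
Variable C : numClosedFieldType.

Definition hc n m (M : 'M[C]_(n, m)) : 'M_(m, n) := map_mx Num.conj M^T.

Lemma hcM n m k (A : 'M[C]_(n, m)) (B : 'M_(m, k)) : hc (A *m B) = hc B *m hc A.
Proof. by rewrite /hc trmx_mul map_mxM. Qed.
Lemma hcD n m (A B : 'M[C]_(n, m)) : hc (A + B) = hc A + hc B.
Proof. by rewrite /hc linearD /= map_mxD. Qed.
Lemma hcN n m (A : 'M[C]_(n, m)) : hc (- A) = - hc A.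
Proof. by rewrite /hc linearN /= map_mxN. Qed.
Lemma hcZ n m (a : C) (A : 'M[C]_(n, m)) : hc (a *: A) = a^* *: hc A.
Proof. by rewrite /hc linearZ /= map_mxZ. Qed.
Lemma hc1 n : hc (1%:M : 'M[C]_n) = 1%:M.
Proof. by rewrite /hc trmx1 map_mx1. Qed.
Lemma hc0 n m : hc (0 : 'M[C]_(n, m)) = 0.
Proof. by rewrite /hc trmx0 map_mx0. Qed.
Lemma hcK n m (A : 'M[C]_(n, m)) : hc (hc A) = A.
Proof. by apply/matrixP => i j; rewrite !mxE conjCK. Qed.
Lemma hc_block n1 n2 (A : 'M[C]_n1) B D (E : 'M[C]_n2) :
  hc (block_mx A B D E) = block_mx (hc A) (hc D) (hc B) (hc E).
Proof. by rewrite /hc tr_block_mx map_block_mx. Qed.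

Section Blocks.
Variable x : nat.
Local Notation M := 'M[C]_(x.+1).
Definition Zt (A : M) : 'M[C]_(x.+1 + x.+1) := block_mx A 0 0 (- A).
Definition Xt : 'M[C]_(x.+1 + x.+1) := block_mx 0 1%:M 1%:M 0.
Definition Yt : 'M[C]_(x.+1 + x.+1) := block_mx 0 (- 'i%:M) ('i%:M) 0.

Lemma ZtZt (A B : M) : Zt A *m Zt B = block_mx (A *m B) 0 0 (A *m B).
Proof.
by rewrite /Zt mulmx_block !mulmx0 !mul0mx !addr0 !add0r mulmxN mulNmx opprK.
Qed.
Lemma ZtZt1 (A : M) : A *m A = 1%:M -> Zt A *m Zt A = 1%:M.
Proof. by move=> h; rewrite ZtZt h -scalar_mx_block. Qed.
Lemma ZtZt_anti (A B : M) : A *m B = - (B *m A) -> Zt A *m Zt B = - (Zt B *m Zt A).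
Proof. by move=> h; rewrite !ZtZt h /Zt !opp_block_mx !oppr0. Qed.
Lemma ZtXt (A : M) : Zt A *m Xt = - (Xt *m Zt A).
Proof.
rewrite /Zt /Xt !mulmx_block !mulmx0 !mul0mx !addr0 !add0r !mulmx1 !mul1mx.
by rewrite !opp_block_mx !oppr0 opprK.
Qed.
Lemma ZtYt (A : M) : Zt A *m Yt = - (Yt *m Zt A).
Proof.
rewrite /Zt /Yt !mulmx_block !mulmx0 !mul0mx !addr0 !add0r.
rewrite !opp_block_mx !oppr0 !mulmxN !mulNmx !opprK.
by rewrite !mul_mx_scalar !mul_scalar_mx.
Qed.
Lemma XtXt : Xt *m Xt = 1%:M.
Proof.
by rewrite /Xt mulmx_block !mulmx0 !mul0mx !addr0 !add0r !mulmx1 -scalar_mx_block.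
Qed.
Lemma YtYt : Yt *m Yt = 1%:M.
Proof.
rewrite /Yt mulmx_block !mulmx0 !mul0mx !addr0 !add0r mulmxN mulNmx.
rewrite -scalar_mxM -expr2 sqrCi.
have -> : - (-1)%:M = 1%:M :> 'M[C]_(x.+1) by apply/matrixP => i j; rewrite !mxE mulNrn opprK.
by rewrite -scalar_mx_block.
Qed.
Lemma XtYt : Xt *m Yt = - (Yt *m Xt).
Proof.
rewrite /Xt /Yt !mulmx_block !mulmx0 !mul0mx !addr0 !add0r !mulmx1 !mul1mx.
by rewrite !opp_block_mx !oppr0 opprK.
Qed.
Lemma hcZt (A : M) : hc (Zt A) = Zt (hc A).
Proof. by rewrite /Zt hc_block !hc0 hcN. Qed.
Lemma hcXt : hc Xt = Xt.
Proof. by rewrite /Xt hc_block !hc0 hc1. Qed.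
Lemma hcYt : hc Yt = Yt.
Proof.
rewrite /Yt hc_block !hc0 hcN -(scalemx1 _ 'i) !hcZ hc1 conjCi.
by rewrite !scaleNr opprK.
Qed.
End Blocks.

Lemma anti_sym n (a b : 'M[C]_n) : a = - b -> b = - a.
Proof. by move=> ->; rewrite opprK. Qed.

Fixpoint dd (m : nat) : nat :=
  match m with 0 => 0 | m'.+1 => (dd m' + (dd m').+1)%N end.

Lemma dd_exp m : (dd m).+1 = (2 ^ m)%N.
Proof. by elim: m => //= m IH; rewrite -addSn IH expnS mul2n addnn. Qed.

Fixpoint gam (m : nat) : nat -> 'M[C]_((dd m).+1) :=
  match m return nat -> 'M[C]_((dd m).+1) with
  | 0 => fun _ => 0
  | m'.+1 => fun k =>
     if (k < 2 * m')%N then Zt (gam m' k)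
     else if k == (2 * m')%N then Xt (dd m') else Yt (dd m')
  end.

Lemma gam_sq m k : (k < 2 * m)%N -> gam m k *m gam m k = 1%:M.
Proof.
elim: m k => [|m IH] k //= hk.
case: ifP => h1; first by apply: ZtZt1; apply: IH.
case: ifP => h2; first exact: XtXt.
exact: YtYt.
Qed.

Lemma gam_hc m k : hc (gam m k) = gam m k.
Proof.
elim: m k => [|m IH] k /=; first by rewrite hc0.
case: ifP => h1; first by rewrite hcZt IH.
case: ifP => h2; [exact: hcXt | exact: hcYt].
Qed.

Lemma gam_anti m k l : (k < 2 * m)%N -> (l < 2 * m)%N -> k != l ->
  gam m k *m gam m l = - (gam m l *m gam m k).
Proof.
elim: m k l => [|m IH] k l //= hk hl kl.
have e : forall j, (j < 2 * m.+1)%N -> ~~ (j < 2 * m)%N -> j != (2 * m)%N -> j = (2 * m).+1.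
  move=> j; rewrite mulnS !addSn add0n => h1 h2 h3.
  by apply/eqP; rewrite eqn_leq -ltnS h1 /= ltn_neqAle eq_sym h3 leqNgt h2.
case k1: (k < 2 * m)%N; case l1: (l < 2 * m)%N => /=.
- exact/ZtZt_anti/IH.
- by case: (l == 2 * m)%N; [exact: ZtXt | exact: ZtYt].
- by case: (k == 2 * m)%N; apply: anti_sym; [exact: ZtXt | exact: ZtYt].
- case k2: (k == 2 * m)%N; case l2: (l == 2 * m)%N.
  + by move/eqP: k2 => k2; move/eqP: l2 => l2; rewrite k2 l2 eqxx in kl.
  + exact: XtYt.
  + apply: anti_sym; exact: XtYt.
  + by rewrite (e k) ?k1 ?k2 // (e l) ?l1 ?l2 // eqxx in kl.
Qed.

End Gam.

Section Main.
Variables (R : realType) (p q : nat).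
Local Notation n := (p + q)%N.
Local Notation C := R[i].
Let m := (n.+1)./2.
Let N' := dd m.
Local Notation Mt := 'M[C]_(N'.+1).

Lemma n_le_2m : (n <= 2 * m)%N.
Proof.
rewrite /m mul2n -ltnS; have := odd_double_half n.+1.
by case: (odd n.+1) => /= <-; rewrite ?ltnSn // add0n ltnW.
Qed.

Definition ceta (i : nat) : C := if (i < p)%N then 1 else -1.
Definition cc (i : nat) : C := if (i < p)%N then 1 else 'i.
Definition gg (i : nat) : Mt := cc i *: gam C m i.

Lemma gg_sq i : (i < n)%N -> gg i * gg i = (ceta i)%:A.
Proof.
move=> hi; rewrite /gg -scalerAl -scalerAr scalerA -mulmxE gam_sq; last first.
  exact: leq_trans hi n_le_2m.
rewrite /cc /ceta; case: (i < p)%N; rewrite ?mulr1 //.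
by rewrite -expr2 sqrCi.
Qed.

Lemma gg_anti i j : (i < n)%N -> (j < n)%N -> i != j -> gg i * gg j = - (gg j * gg i).
Proof.
move=> hi hj ij; rewrite /gg -!scalerAl -!scalerAr !scalerA -!mulmxE gam_anti //.
- by rewrite mulrC scalerN.
- exact: leq_trans hi n_le_2m.
- exact: leq_trans hj n_le_2m.
Qed.

Definition inA (A : {set 'I_n}) : pred nat :=
  fun i => if insub i is Some x then x \in A else false.

Lemma inA_val A (x : 'I_n) : inA A x = (x \in A).
Proof. by rewrite /inA valK. Qed.

Lemma inA_ge A i : (n <= i)%N -> inA A i = false.
Proof. by move=> h; rewrite /inA insubF // ltnNge h. Qed.

Definition G (A : {set 'I_n}) : Mt := PP gg n (inA A).

Lemma PP_eq (g : nat -> Mt) k (a b : pred nat) : (forall i, (i < k)%N -> a i = b i) ->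
  PP g k a = PP g k b.
Proof. by move=> h; apply: eq_big_nat => i /andP[_ /h ->]. Qed.

Lemma sum_ord_nat (F : nat -> nat) : (\sum_(i < n) F i = \sum_(0 <= i < n) F i)%N.
Proof. by rewrite big_mkord. Qed.

Lemma card_pairs (A B : {set 'I_n}) :
  #|[set ab : 'I_n * 'I_n | (ab.1 \in A) && (ab.2 \in B) && (ab.2 < ab.1)%N]|
  = cnt n (inA A) (inA B).
Proof.
rewrite cardsE -sum1_card big_mkcond /=.
rewrite -(pair_bigA _ (fun i j : 'I_n => if (i \in A) && (j \in B) && (j < i)%N then 1%N else 0%N)) /=.
rewrite /cnt [RHS]big_mkord; apply: eq_bigr => i _.
rewrite inA_val; case: (i \in A) => /=; last by rewrite big1.
rewrite mul1n (big_nat_widen _ _ _ _ _ (ltnW (ltn_ord i))) big_mkord.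
rewrite [RHS]big_mkcond; apply: eq_bigr => j _; rewrite inA_val.
by case: (j \in B); case: (j < i)%N.
Qed.


Lemma eta_prod (A B : {set 'I_n}) :
  \prod_(c in A :&: B) cl_eta R c = etaP ceta n (inA A) (inA B).
Proof.
rewrite /etaP big_mkcond [RHS]big_mkord /=; apply: eq_bigr => i _.
by rewrite !inA_val in_setI /cl_eta /ceta.
Qed.

Lemma sign_eq (A B : {set 'I_n}) :
  cl_sign R A B = (-1) ^+ cnt n (inA A) (inA B) * etaP ceta n (inA A) (inA B).
Proof. by rewrite /cl_sign card_pairs eta_prod. Qed.

Lemma inA_symdiff (A B : {set 'I_n}) i : (i < n)%N ->
  inA (cl_symdiff A B) i = inA A i (+) inA B i.
Proof.
move=> hi; have -> : i = val (Ordinal hi) by [].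
rewrite !inA_val /cl_symdiff !inE.
by case: (Ordinal hi \in A); case: (Ordinal hi \in B).
Qed.

Lemma G_mul (A B : {set 'I_n}) : G A * G B = cl_sign R A B *: G (cl_symdiff A B).
Proof.
rewrite /G (PP_mul (L := n) gg_sq gg_anti) // sign_eq; congr (_ *: _).
by apply: PP_eq => i hi; rewrite inA_symdiff.
Qed.

Definition beta (X : cl R p q) : Mt := \sum_(A : {set 'I_n}) X A *: G A.

Lemma betaD X Y : beta (X + Y) = beta X + beta Y.
Proof. by rewrite /beta -big_split; apply: eq_bigr => A _; rewrite ffunE scalerDl. Qed.
Lemma betaZ c X : beta (c *: X) = c *: beta X.
Proof. by rewrite /beta scaler_sumr; apply: eq_bigr => A _; rewrite ffunE scalerA. Qed.
Lemma beta0 : beta 0 = 0.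
Proof. by rewrite /beta big1 // => A _; rewrite ffunE scale0r. Qed.
Lemma betaN X : beta (- X) = - beta X.
Proof. by rewrite -scaleN1r betaZ scaleN1r. Qed.
Lemma betaB X Y : beta (X - Y) = beta X - beta Y.
Proof. by rewrite betaD betaN. Qed.
Lemma beta_sum (I : Type) (r : seq I) (F : I -> cl R p q) :
  beta (\sum_(i <- r) F i) = \sum_(i <- r) beta (F i).
Proof. exact: (big_morph beta betaD beta0). Qed.

Lemma beta_basis A : beta (cl_basis R A) = G A.
Proof.
rewrite /beta (bigD1 A) //= big1 ?addr0 => [|B BA]; first by rewrite ffunE eqxx scale1r.
by rewrite ffunE (negbTE BA) scale0r.
Qed.

Lemma G0 : G set0 = 1.
Proof.
rewrite /G /PP big1_seq // => i; rewrite mem_index_iota => /andP[_ hi].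
by have -> : i = val (Ordinal hi) by []; rewrite inA_val inE.
Qed.

Lemma beta_one : beta (cl_one R p q) = 1.
Proof. by rewrite /cl_one beta_basis G0. Qed.

Lemma G1 (a : 'I_n) : G [set a] = gg a.
Proof.
rewrite /G /PP big_mkord.
rewrite (eq_bigr (fun i : 'I_n => if i == a then gg i else 1)); last first.
  by move=> i _; rewrite inA_val inE.
by rewrite -big_mkcond big_pred1_eq.
Qed.

Lemma beta_gen a : beta (cl_gen R a) = gg a.
Proof. by rewrite /cl_gen beta_basis G1. Qed.

Lemma beta_mul X Y : beta (cl_mul X Y) = beta X * beta Y.
Proof.
rewrite /beta mulr_suml.
under eq_bigr => D _ do rewrite ffunE scaler_suml.
rewrite exchange_big /=; apply: eq_bigr => A _.
under eq_bigr => D _ do rewrite scaler_suml.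
rewrite exchange_big /= mulr_sumr; apply: eq_bigr => B _.
rewrite (bigD1 (cl_symdiff A B)) //= eqxx big1 ?addr0; last first.
  by move=> D /negbTE; rewrite eq_sym => ->; rewrite scale0r.
rewrite -[in RHS]scalerAl -[in RHS]scalerAr G_mul !scalerA; congr (_ *: _).
by rewrite -mulrA mulrC.
Qed.

Lemma sum_split (a : pred nat) b k :
  (\sum_(0 <= j < k) a j = \sum_(0 <= j < k) (a j && (j != b)) + (a b && (b < k)))%N.
Proof.
elim: k => [|k IH]; first by rewrite !big_geq // andbF.
rewrite !big_nat_recr //= IH -!addnA; congr (_ + _)%N.
case: (eqVneq k b) => [->|kb] /=; first by rewrite ltnn ltnSn !andbF andbT.
by rewrite andbT addnC; congr (_ + _)%N; rewrite ltnS [(b <= k)%N]leq_eqVlt eq_sym (negbTE kb).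
Qed.

Lemma tr_anti (x P : Mt) (S : C) : x * x = 1 -> x * P = S *: (P * x) -> S = -1 -> \tr P = 0.
Proof.
move=> xx xP S1.
have h : \tr P = S * \tr P.
  rewrite -[in LHS](mul1r P) -xx -mulrA xP -scalerAr mxtraceZ; congr (_ * _).
  by rewrite -!mulmxE mxtrace_mulC -mulmxA !mulmxE xx mulr1.
move/eqP: h; rewrite S1 mulN1r -subr_eq0 opprK -mulr2n -mulr_natr mulf_eq0.
by rewrite pnatr_eq0 orbF => /eqP.
Qed.

Lemma trG_key (A : {set 'I_n}) b : (b < 2 * m)%N ->
  odd (\sum_(0 <= j < n) (inA A j && (j != b))) -> \tr (G A) = 0.
Proof.
move=> hb hodd.
have hs : forall j, (j < n)%N -> inA A j ->
   gam C m b * gg j = (if j == b then 1 else -1) *: (gg j * gam C m b).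
  move=> j hj _; rewrite /gg -scalerAl -scalerAr; case: (eqVneq j b) => [->|jb].
    by rewrite scale1r.
  rewrite -!mulmxE gam_anti //; [|exact: leq_trans hj n_le_2m|by rewrite eq_sym].
  by rewrite scalerN scaleN1r.
apply: (tr_anti (x := gam C m b)).
- by rewrite -mulmxE gam_sq.
- exact: comm_PP hs.
rewrite /sgnP (eq_big_nat _ _ (F2 := fun j => if inA A j && (j != b) then -1 else 1)); last first.
  by move=> j _; case: (inA A j); case: (j == b).
have := sgnP_const (-1 : C) n (fun j => inA A j && (j != b)); rewrite /sgnP => ->.
by rewrite -signr_odd hodd expr1.
Qed.

Lemma trG (A : {set 'I_n}) : A != set0 -> \tr (G A) = 0.
Proof.
move=> A0.
case: (boolP (odd (\sum_(0 <= j < n) inA A j))) => hc.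
  case: (ltnP n (2 * m)) => hn.
    apply: (@trG_key A n) => //.
    by move: hc; rewrite (sum_split _ n) ltnn andbF addn0.
  case: (boolP [exists j : 'I_n, j \notin A]) => [/existsP[j jA]|].
    apply: (@trG_key A j); first exact: leq_trans (ltn_ord j) n_le_2m.
    by move: hc; rewrite (sum_split _ j) inA_val (negbTE jA) addn0.
  rewrite negb_exists => /forallP hall.
  have : (\sum_(0 <= j < n) inA A j = n)%N.
    rewrite big_mkord (eq_bigr (fun _ => 1%N)); first by rewrite sum1_card card_ord.
    by move=> j _; rewrite inA_val; have := hall j; rewrite negbK => ->.
  move=> e; move: hc; rewrite e.
  have -> : n = (2 * m)%N by apply/eqP; rewrite eqn_leq n_le_2m hn.
  by rewrite oddM.
case/set0Pn: A0 => x xA.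
apply: (@trG_key A x); first exact: leq_trans (ltn_ord x) n_le_2m.
by move: hc; rewrite (sum_split _ x) inA_val xA ltn_ord oddD /= addbT negbK.
Qed.

Lemma trG_all (A : {set 'I_n}) : \tr (G A) = (N'.+1)%:R * (A == set0)%:R.
Proof.
case: (eqVneq A set0) => [->|A0]; last by rewrite trG // mulr0.
by rewrite G0 mulr1 mxtrace1.
Qed.

Lemma tr_beta X : \tr (beta X) = (N'.+1)%:R * X set0.
Proof.
rewrite /beta raddf_sum (bigD1 set0) //= big1 ?addr0.
  by rewrite mxtraceZ trG_all eqxx mulr1 mulrC.
by move=> A A0; rewrite mxtraceZ trG // mulr0.
Qed.

Lemma hcMr (x y : Mt) : hc (x * y) = hc y * hc x.
Proof. by rewrite -!mulmxE hcM. Qed.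

Lemma hc_gg i : hc (gg i) = ceta i *: gg i.
Proof.
rewrite /gg hcZ gam_hc scalerA /cc /ceta; case: (i < p)%N; first by rewrite conjC1 mulr1.
by rewrite conjCi mulN1r.
Qed.

Lemma hc_prod (I : Type) (r : seq I) (F : I -> Mt) :
  hc (\prod_(i <- r) F i) = \prod_(i <- rev r) hc (F i).
Proof.
elim: r => [|a r IH]; first by rewrite !big_nil hc1.
by rewrite big_cons hcMr IH rev_cons -cats1 big_cat /= big_seq1.
Qed.

Lemma beta_foldr (s : seq 'I_n) (f : 'I_n -> cl R p q) :
  beta (foldr (@cl_mul R p q) (cl_one R p q) [seq f a | a <- s]) = \prod_(a <- s) beta (f a).
Proof.
elim: s => [|a s IH] /=; first by rewrite big_nil beta_one.
by rewrite beta_mul IH big_cons.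
Qed.

Lemma beta_basis_inv A : beta (cl_basis_inv R A) = hc (G A).
Proof.
rewrite /cl_basis_inv beta_foldr /G /PP hc_prod.
under eq_bigr => a _ do rewrite betaZ beta_gen.
rewrite /index_iota subn0 -val_enum_ord -map_rev big_map enumT -filter_rev.
rewrite /enum_mem big_filter big_mkcond /=; apply: eq_bigr => a _.
rewrite inA_val; case: (a \in A); last by rewrite hc1.
by rewrite hc_gg.
Qed.

Lemma beta_dagger X : beta (cl_dagger X) = hc (beta X).
Proof.
rewrite /cl_dagger beta_sum [in RHS]/beta (big_morph (@hc _ _ _) (@hcD _ _ _) (@hc0 _ _ _)).
by apply: eq_bigr => A _; rewrite betaZ hcZ beta_basis_inv.
Qed.

Lemma clN : cl_N p q = N'.+1.
Proof. by rewrite /cl_N /N' dd_exp. Qed.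

Lemma Nnz : (N'.+1)%:R != 0 :> C.
Proof. by rewrite pnatr_eq0. Qed.

Lemma beta_Mk X k : beta (cl_Mk X k) = flB (beta X) k.
Proof.
elim: k => [|k IH] //=.
rewrite beta_mul betaB betaZ beta_one IH mulmxE; congr (_ * (_ - _ *: _)) => //.
rewrite /cl_scalar -IH tr_beta clN mulrAC.
by rewrite mulrC.
Qed.

Lemma clC_N X : cl_C X (cl_N p q) = - ((-1) ^+ N'.+1 * \det (beta X)).
Proof.
rewrite /cl_C clN divff ?Nnz // mul1r -flc_det // -beta_Mk tr_beta /=.
by rewrite mulrC mulKf ?Nnz.
Qed.

Lemma det_hc (B : Mt) : \det (hc B) = (\det B)^*.
Proof. by rewrite /hc det_map_mx det_tr. Qed.

Lemma part1 (X : cl R p q) : cl_C (cl_mul (cl_dagger X) X) (cl_N p q) = 0 <-> cl_C X (cl_N p q) = 0.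
Proof.
rewrite !clC_N beta_mul beta_dagger -mulmxE det_mulmx det_hc.
split => /eqP; rewrite oppr_eq0 mulf_eq0 signr_eq0 /= => /eqP h; apply/eqP;
  rewrite oppr_eq0 mulf_eq0 signr_eq0 /=.
  by move/eqP: h; rewrite mulrC mul_conjC_eq0.
by rewrite h mulr0.
Qed.

Lemma PP_unitary k (a : pred nat) : (k <= n)%N -> hc (PP gg k a) * PP gg k a = 1.
Proof.
elim: k => [|k IH] hk; first by rewrite PP0 hc1 mulr1.
rewrite PPS hcMr -mulrA [hc (PP gg k a) * _]mulrA.
rewrite IH ?(ltnW hk) // mul1r.
case: (a k); last by rewrite hc1 mulr1.
rewrite hc_gg -scalerAl gg_sq // scalerA /ceta.
by case: (k < p)%N; rewrite ?mulr1 ?mulrNN ?mulr1 scale1r.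
Qed.

Lemma G_unitary (A : {set 'I_n}) : hc (G A) * G A = 1.
Proof. exact: PP_unitary. Qed.

Lemma sign_nz (A B : {set 'I_n}) : cl_sign R A B != 0.
Proof.
rewrite /cl_sign mulf_neq0 ?signr_eq0 //; apply/prodf_neq0 => c _.
by rewrite /cl_eta; case: (c < p)%N; rewrite ?oppr_eq0 oner_eq0.
Qed.

Lemma symdiff0 (A B : {set 'I_n}) : cl_symdiff A B = set0 -> A = B.
Proof.
move=> h; apply/setP => x; have := congr1 (fun S : {set 'I_n} => x \in S) h.
by rewrite /cl_symdiff !inE; case: (x \in A); case: (x \in B).
Qed.

Lemma tr_hcG (A B : {set 'I_n}) : \tr (hc (G A) * G B) = (N'.+1)%:R * (A == B)%:R.
Proof.
case: (eqVneq A B) => [<-|AB]; first by rewrite G_unitary mulr1 mxtrace1.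
rewrite mulr0.
have hAA : G A * G A = cl_sign R A A *: 1.
  rewrite G_mul; congr (_ *: _).
  by rewrite -G0; congr G; apply/setP => x; rewrite /cl_symdiff !inE; case: (x \in A).
have e : cl_sign R A A *: hc (G A) = G A.
  by rewrite -[hc (G A)]mulr1 scalerAr -hAA mulrA G_unitary mul1r.
have : cl_sign R A A * \tr (hc (G A) * G B) = 0.
  rewrite -mxtraceZ scalerAl e G_mul mxtraceZ trG ?mulr0 //.
  by apply/eqP => /symdiff0 h; rewrite h eqxx in AB.
by move/eqP; rewrite mulf_eq0 (negbTE (sign_nz A A)) /= => /eqP.
Qed.

Lemma hc_beta X : hc (beta X) = \sum_A (X A)^* *: hc (G A).
Proof.
rewrite /beta (big_morph (@hc _ _ _) (@hcD _ _ _) (@hc0 _ _ _)).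
by apply: eq_bigr => A _; rewrite hcZ.
Qed.

Lemma tr_hcBB X : \tr (hc (beta X) * beta X) = (N'.+1)%:R * \sum_A (X A)^* * X A.
Proof.
rewrite hc_beta mulr_suml raddf_sum mulr_sumr; apply: eq_bigr => A _.
rewrite [beta X]/beta mulr_sumr raddf_sum /=.
rewrite (bigD1 A) //= big1 ?addr0.
  by rewrite -scalerAl -scalerAr !mxtraceZ tr_hcG eqxx mulr1 mulrA mulrC.
move=> B BA; rewrite -scalerAl -scalerAr !mxtraceZ tr_hcG.
by rewrite eq_sym (negbTE BA) !mulr0.
Qed.

Lemma part2 (X : cl R p q) : cl_C (cl_mul (cl_dagger X) X) 1 = 0 <-> X = 0.
Proof.
have e : cl_C (cl_mul (cl_dagger X) X) 1 = (N'.+1)%:R * \sum_A (X A)^* * X A.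
  rewrite -tr_hcBB -beta_dagger -beta_mul tr_beta /cl_C clN divr1 /=.
  by [].
rewrite e; split.
  move/eqP; rewrite mulf_eq0 (negbTE Nnz) /= => /eqP h.
  apply/ffunP => A; rewrite ffunE.
  have hge : forall B : {set 'I_n}, true -> 0 <= (X B)^* * X B.
    by move=> B _; rewrite -normCKC exprn_ge0.
  have := @psumr_eq0P _ _ (fun _ => true) (fun A => (X A)^* * X A) hge h A isT.
  by move/eqP; rewrite mulrC mul_conjC_eq0 => /eqP.
move=> ->; rewrite big1 ?mulr0 // => A _; by rewrite ffunE mulr0.
Qed.

End Main.

Unset Implicit Arguments.

Theorem lemma3 (R : realType) (p q : nat) (M : cl R p q) :
  (0 < p + q)%N ->
  (cl_C (cl_mul (cl_dagger M) M) (cl_N p q) = 0 <-> cl_C M (cl_N p q) = 0) /\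
  (cl_C (cl_mul (cl_dagger M) M) 1 = 0 <-> M = 0).
Proof.
move=> _; split; [exact: part1 | exact: part2].
Qed.
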